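(* (a) The integer pairs $(m,n)$ with $\mathrm{N}_{K/\mathbb{Q}}(m+n\gamma^2)=\pm1$ are exactly $(\pm1,0)$, $(0,\pm1)$, $\pm(-1,1)$, $\pm(2,-1)$, $\pm(-7,4)$. (b) The integer pairs $(m,n)$ with $\mathrm{N}_{K/\mathbb{Q}}(m+n\gamma^2)=\pm5$ are exactly $\pm(1,1)$, $\pm(-3,2)$. (c) The integer pairs $(m,n)$ with $\mathrm{N}_{K/\mathbb{Q}}(m+n\gamma^2)=\pm7$ are exactly $\pm(-1,2)$, $\pm(-5,3)$.
   Context: $\gamma$ is the real root of $x^3-x-1$, $K=\mathbb{Q}(\gamma)$, and $\mathrm{N}_{K/\mathbb{Q}}$ is the field norm; note $\mathrm{N}_{K/\mathbb{Q}}(m+n\gamma^2)=m^3+2m^2n+mn^2+n^3$. *)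

(* Defs.v *)
From mathcomp Require Import all_boot all_order all_algebra.
Set Implicit Arguments. Unset Strict Implicit. Unset Printing Implicit Defensive.
Import Order.TTheory GRing.Theory Num.Theory.
Local Open Scope ring_scope.

(* K = Q(gamma), gamma^3 = gamma + 1, with Q-basis (1, gamma, gamma^2).
   The element a + b*gamma + c*gamma^2 acts on K by multiplication; in the
   basis (1, gamma, gamma^2) (row-vector convention) its images are
     alpha*1       = (a, b, c)
     alpha*gamma   = (c, a + c, b)
     alpha*gamma^2 = (b, b + c, a + c)
   using gamma^3 = 1 + gamma, gamma^4 = gamma + gamma^2. *)
Definition mulmx_gamma (a b c : int) : 'M[int]_3 :=
  \matrix_(i < 3, j < 3)
    nth 0 (nth [::] [:: [:: a; b; c]; [:: c; a + c; b]; [:: b; b + c; a + c]] i) j.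

Definition normK (a b c : int) : int := \det (mulmx_gamma a b c).

(* Main.v *)
Require Import Defs.
From Stdlib Require Import ZArith Lia Znumtheory List Bool Reals Lra Psatz Ranalysis.
Set Bullet Behavior "Strict Subproofs".
Module Thue.
Local Open Scope Z_scope.

Record R3 := mk { c0 : Z; c1 : Z; c2 : Z }.
Definition radd (x y : R3) := mk (c0 x + c0 y) (c1 x + c1 y) (c2 x + c2 y).
Definition ropp (x : R3) := mk (- c0 x) (- c1 x) (- c2 x).
Definition rsub (x y : R3) := radd x (ropp y).
Definition rmul (x y : R3) :=
  let a0 := c0 x in let a1 := c1 x in let a2 := c2 x in
  let b0 := c0 y in let b1 := c1 y in let b2 := c2 y in
  let d3 := a1*b2 + a2*b1 in let d4 := a2*b2 in
  mk (a0*b0 + d3) (a0*b1 + a1*b0 + d3 + d4) (a0*b2 + a1*b1 + a2*b0 + d4).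
Definition r0 := mk 0 0 0.
Definition r1 := mk 1 0 0.

Definition inj (c : Z) := mk c 0 0.
Definition gam := mk 0 1 0.
Definition gami := mk (-1) 0 1.

Lemma R3eq x y : c0 x = c0 y -> c1 x = c1 y -> c2 x = c2 y -> x = y.
Proof. destruct x, y; simpl; intros; subst; reflexivity. Qed.

Fixpoint pwn (x : R3) (n : nat) : R3 := match n with O => r1 | S n => rmul x (pwn x n) end.
Fixpoint zpow (c : Z) (n : nat) : Z := match n with O => 1 | S n => c * zpow c n end.
Ltac rs := cbn [c0 c1 c2 radd ropp rsub rmul r0 r1 inj gam gami pwn zpow]; rewrite ?Nat2Z.inj_0, ?Nat2Z.inj_succ.
Ltac r3 := intros; apply R3eq; rs; ring.

Lemma R3th : ring_theory r0 r1 radd rmul rsub ropp (@eq R3).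
Proof. split; r3. Qed.
Add Ring R3ring : R3th.

Declare Scope r3_scope.
Infix "+" := radd : r3_scope.
Infix "*" := rmul : r3_scope.
Delimit Scope r3_scope with R3.



Lemma inj_add a b : inj (a + b) = radd (inj a) (inj b). Proof. r3. Qed.
Lemma inj_mul a b : inj (a * b) = rmul (inj a) (inj b). Proof. r3. Qed.
Lemma c1_add x y : c1 (radd x y) = c1 x + c1 y. Proof. reflexivity. Qed.
Lemma c1_inj c x : c1 (rmul (inj c) x) = c * c1 x. Proof. rs; ring. Qed.

Lemma pwn_add x a b : pwn x (a + b) = rmul (pwn x a) (pwn x b).
Proof. induction a; simpl. ring. rewrite IHa; ring. Qed.
Lemma pwn_mul x a b : pwn x (a * b) = pwn (pwn x a) b.
Proof.
  induction b; simpl. rewrite Nat.mul_0_r; reflexivity.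
  rewrite Nat.mul_succ_r, Nat.add_comm, pwn_add, IHb; ring.
Qed.
Lemma pwn_inj c y n : pwn (rmul (inj c) y) n = rmul (inj (zpow c n)) (pwn y n).
Proof. induction n; simpl. r3. rewrite IHn, inj_mul; ring. Qed.
Lemma pwn_mulx x y n : pwn (rmul x y) n = rmul (pwn x n) (pwn y n).
Proof. induction n; simpl. ring. rewrite IHn; ring. Qed.

Lemma zpow_mul a b n : zpow (a*b) n = zpow a n * zpow b n.
Proof. induction n; simpl; [ring| rewrite IHn; ring]. Qed.

Lemma L1 p q y u : exists E,
  pwn (radd r1 (rmul (inj (p*q)) y)) u =
  radd (radd r1 (rmul (inj (Z.of_nat u * (p*q))) y)) (rmul (inj (p*p*q)) E).
Proof.
  induction u as [|u [E IH]].
  - exists r0. r3.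
  - exists (radd (rmul (rmul (inj (Z.of_nat u * q)) y) y) (rmul E (radd r1 (rmul (inj (p*q)) y)))).
    simpl pwn. rewrite IH. apply R3eq; rs; rewrite ?Nat2Z.inj_succ; ring.
Qed.

Section Strass.
Variable p : Z.
Variable pn : nat.
Hypothesis Hp : p = Z.of_nat (S (S (S pn))).
Hypothesis Hbin : forall X, exists Sx,
  pwn (radd r1 X) (S (S (S pn))) =
  radd (radd (radd r1 (rmul (inj p) X)) (rmul (rmul (inj p) (rmul X X)) Sx)) (pwn X (S (S (S pn)))).

Lemma L2 q y : exists y' f,
  pwn (radd r1 (rmul (inj (p*q)) y)) (S (S (S pn))) = radd r1 (rmul (inj (p*p*q)) y') /\
  y' = radd y (rmul (inj p) f).
Proof.
  destruct (Hbin (rmul (inj (p*q)) y)) as [Sx HS].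
  rewrite HS, pwn_inj, zpow_mul.
  exists (radd (radd y (rmul (inj (p*q)) (rmul (rmul y y) Sx)))
            (rmul (inj (p * zpow p pn * zpow q (S (S pn)))) (pwn y (S (S (S pn)))))).
  exists (radd (rmul (inj q) (rmul (rmul y y) Sx))
            (rmul (inj (zpow p pn * zpow q (S (S pn)))) (pwn y (S (S (S pn)))))).
  split.
  - cbn [zpow]. rewrite ?inj_mul. ring.
  - rewrite ?inj_mul. ring.
Qed.

Variable q0 : Z.
Variables A d : R3.
Hypothesis HA : A = radd r1 (rmul (inj (p*q0)) d).

Lemma L3 e : exists y' f,
  pwn A (Nat.pow (S (S (S pn))) e) = radd r1 (rmul (inj (p * (zpow p e * q0))) y') /\
  y' = radd d (rmul (inj p) f).
Proof.
  induction e as [|e [y' [f [H1 H2]]]].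
  - exists d, r0. rewrite Nat.pow_0_r, HA. split; apply R3eq; rs; ring.
  - rewrite Nat.pow_succ_r', Nat.mul_comm, pwn_mul, H1.
    destruct (L2 (zpow p e * q0) y') as [y'' [f' [H3 H4]]].
    exists y'', (radd f f'). rewrite H3. split.
    + apply R3eq; rs; ring.
    + rewrite H4, H2. ring.
Qed.

Hypothesis Hprime : prime p.
Variable w : R3.
Hypothesis Hw : c1 w = 0.
Hypothesis Hd : ~ (p | c1 (rmul d w)).

Lemma decomp t : (0 < t)%nat -> exists e u, t = (Nat.pow (S (S (S pn))) e * u)%nat /\ ~ (p | Z.of_nat u).
Proof.
  induction t as [t IH] using (well_founded_induction lt_wf). intros Ht.
  destruct (Znumtheory.Zdivide_dec p (Z.of_nat t)) as [[k Hk]|Hn].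
  - assert (Hk0 : 0 <= k) by (rewrite Hp in Hk; nia).
    destruct (IH (Z.to_nat k)) as [e [u [H1 H2]]]; [rewrite Hp in Hk; lia| rewrite Hp in Hk; lia|].
    exists (S e), u. split; auto. rewrite Nat.pow_succ_r'. rewrite <- Nat.mul_assoc, <- H1.
    rewrite Hp in Hk. lia.
  - exists O, t. simpl. split; [lia|auto].
Qed.

Hypothesis Hq0 : q0 <> 0.

Lemma zpow_nz c n : c <> 0 -> zpow c n <> 0.
Proof. intros H; induction n; simpl; lia. Qed.

Lemma strass t : (0 < t)%nat -> c1 (rmul (pwn A t) w) <> 0.
Proof.
  intros Ht. destruct (decomp t Ht) as [e [u [Ht' Hu]]]. subst t.
  rewrite pwn_mul. destruct (L3 e) as [y' [f [H1 H2]]]. rewrite H1.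
  destruct (L1 p (zpow p e * q0) y' u) as [E HE]. rewrite HE.
  rewrite H2. intros Hc.
  assert (Hc' : c1 (rmul (radd (radd r1 (rmul (inj (Z.of_nat u * (p * (zpow p e * q0)))) (radd d (rmul (inj p) f)))) (rmul (inj (p * p * (zpow p e * q0))) E)) w)
     = (p * (zpow p e * q0)) * (Z.of_nat u * c1 (rmul d w) + p * (Z.of_nat u * c1 (rmul f w) + c1 (rmul E w))) + c1 w).
  { rs. ring. }
  rewrite Hc', Hw, Z.add_0_r in Hc.
  assert (Hpz : p <> 0) by (rewrite Hp; lia).
  assert (HP : p * (zpow p e * q0) <> 0).
  { apply Z.neq_mul_0; split; auto. apply Z.neq_mul_0; split; auto. apply zpow_nz; auto. }
  apply Z.mul_eq_0 in Hc. destruct Hc as [Hc|Hc]; [contradiction|].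
  assert (Hdiv : (p | Z.of_nat u * c1 (rmul d w))).
  { exists (- (Z.of_nat u * c1 (rmul f w) + c1 (rmul E w))). lia. }
  destruct (prime_mult p Hprime _ _ Hdiv); contradiction.
Qed.
End Strass.

Lemma gam_gami : rmul gam gami = r1. Proof. r3. Qed.

Definition pwz (z : Z) : R3 :=
  match z with Z0 => r1 | Zpos p => pwn gam (Pos.to_nat p) | Zneg p => pwn gami (Pos.to_nat p) end.

Lemma pwz_succ z : pwz (Z.succ z) = rmul gam (pwz z).
Proof.
  destruct z as [|p|p].
  - change (rmul gam r1 = rmul gam r1). reflexivity.
  - rewrite <- Pos2Z.inj_succ. simpl. rewrite Pos2Nat.inj_succ. reflexivity.
  - destruct p using Pos.peano_ind.
    + change (r1 = rmul gam (rmul gami r1)). transitivity (rmul (rmul gam gami) r1); [rewrite gam_gami; ring|ring].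
    + replace (Z.succ (Z.neg (Pos.succ p))) with (Z.neg p) by lia.
      change (pwn gami (Pos.to_nat p) = rmul gam (pwn gami (Pos.to_nat (Pos.succ p)))).
      rewrite Pos2Nat.inj_succ. change (pwn gami (Pos.to_nat p) = rmul gam (rmul gami (pwn gami (Pos.to_nat p)))).
      transitivity (rmul (rmul gam gami) (pwn gami (Pos.to_nat p))); [rewrite gam_gami; ring|ring].
Qed.

Lemma pwz_pred z : pwz (Z.pred z) = rmul gami (pwz z).
Proof.
  rewrite <- (Z.succ_pred z) at 2. rewrite pwz_succ.
  transitivity (rmul (rmul gam gami) (pwz (Z.pred z))); [rewrite gam_gami; ring| ring].
Qed.

Lemma pwz_add a b : pwz (a + b) = rmul (pwz a) (pwz b).
Proof.
  induction a using Z.peano_ind.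
  - simpl. ring.
  - rewrite Z.add_succ_l, !pwz_succ, IHa. ring.
  - rewrite Z.add_pred_l, !pwz_pred, IHa. ring.
Qed.

Lemma pwz_nat n : pwz (Z.of_nat n) = pwn gam n.
Proof. destruct n. reflexivity. simpl. rewrite SuccNat2Pos.id_succ. reflexivity. Qed.
Lemma pwz_negnat n : pwz (- Z.of_nat n) = pwn gami n.
Proof. destruct n. reflexivity. simpl. rewrite SuccNat2Pos.id_succ. reflexivity. Qed.

Definition redm (M : Z) (x : R3) := mk (c0 x mod M) (c1 x mod M) (c2 x mod M).
Lemma redm_spec M x : M <> 0 -> x = radd (redm M x) (rmul (inj M) (mk (c0 x / M) (c1 x / M) (c2 x / M))).
Proof.
  intros HM. destruct x as [a b c]. unfold redm. apply R3eq; rs;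
  rewrite Zmod_eq_full by auto; ring.
Qed.

Fixpoint powred (M : Z) (x : R3) (n : nat) : R3 :=
  match n with O => redm M r1 | S n => redm M (rmul x (powred M x n)) end.

Lemma powred_spec M x n : M <> 0 -> exists E, pwn x n = radd (powred M x n) (rmul (inj M) E).
Proof.
  intros HM. induction n as [|n [E IH]].
  - cbn [pwn powred]. eexists. apply redm_spec; auto.
  - cbn [pwn powred]. rewrite IH.
    set (y := rmul x (powred M x n)).
    eexists (radd (mk (c0 y / M) (c1 y / M) (c2 y / M)) (rmul x E)).
    transitivity (radd y (rmul (inj M) (rmul x E))); [unfold y; ring|].
    rewrite (redm_spec M y HM) at 1. ring.
Qed.

Lemma pwn_cong M D n : exists E, pwn (radd r1 (rmul (inj M) D)) n = radd r1 (rmul (inj M) E).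
Proof.
  induction n as [|n [E IH]].
  - exists r0. r3.
  - cbn [pwn]. rewrite IH. exists (radd (radd D E) (rmul (inj M) (rmul D E))). r3.
Qed.

Fixpoint sieve (M L : Z) (Zs : list Z) (v : R3) (n : nat) (r : Z) (cur : R3) : bool :=
  match n with
  | O => true
  | S n' => ((negb (c1 cur mod M =? 0)) || existsb (fun z0 => z0 mod L =? r) Zs)
            && sieve M L Zs v n' (r + 1) (redm M (rmul gam cur))
  end.

Lemma sieve_sound M L Zs v n : M <> 0 -> forall r cur, sieve M L Zs v n r cur = true ->
  (exists E, rmul (pwz r) v = radd cur (rmul (inj M) E)) ->
  forall r', r <= r' < r + Z.of_nat n ->
  c1 (rmul (pwz r') v) mod M <> 0 \/ exists z0, In z0 Zs /\ z0 mod L = r'.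
Proof.
  intros HM. induction n as [|n IH]; intros r cur Hs [E HE] r' Hr'.
  - simpl in Hr'. lia.
  - cbn [sieve] in Hs. apply andb_prop in Hs. destruct Hs as [H1 H2].
    destruct (Z.eq_dec r' r) as [->|Hne].
    + apply orb_prop in H1. destruct H1 as [H1|H1].
      * left. rewrite HE. rewrite c1_add, c1_inj.
        rewrite Z.mul_comm, Z_mod_plus_full.
        apply negb_true_iff in H1. apply Z.eqb_neq in H1. exact H1.
      * right. apply existsb_exists in H1. destruct H1 as [z0 [Hin Hz]].
        apply Z.eqb_eq in Hz. eauto.
    + apply (IH (r + 1) (redm M (rmul gam cur)) H2).
      * set (y := rmul gam cur).
        exists (radd (mk (c0 y / M) (c1 y / M) (c2 y / M)) (rmul gam E)).
        rewrite pwz_add. change (pwz 1) with (rmul gam r1).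
        transitivity (radd y (rmul (inj M) (rmul gam E))).
        { unfold y. transitivity (rmul gam (rmul (pwz r) v)); [ring|]. rewrite HE. ring. }
        rewrite (redm_spec M y HM) at 1. ring.
      * rewrite Nat2Z.inj_succ in Hr'. lia.
Qed.

Definition Hbin_prop (p : Z) (pn : nat) := forall X, exists Sx,
  pwn (radd r1 X) (S (S (S pn))) =
  radd (radd (radd r1 (rmul (inj p) X)) (rmul (rmul (inj p) (rmul X X)) Sx)) (pwn X (S (S (S pn)))).

Definition scert (A w : R3) := exists p pn q0 d,
  p = Z.of_nat (S (S (S pn))) /\ Hbin_prop p pn /\ A = radd r1 (rmul (inj (p * q0)) d) /\
  prime p /\ q0 <> 0 /\ ~ (p | c1 (rmul d w)).

Lemma scert_ok A w : scert A w -> c1 w = 0 -> forall t, (0 < t)%nat -> c1 (rmul (pwn A t) w) <> 0.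
Proof.
  intros [p [pn [q0 [d [H1 [H2 [H3 [H4 [H5 H6]]]]]]]]] Hw t Ht.
  exact (strass p pn H1 H2 q0 A d H3 H4 w Hw H6 H5 t Ht).
Qed.

Lemma pwz_Lt Ln t : pwz (Z.of_nat Ln * t) =
  if Z_le_gt_dec 0 t then pwn (pwn gam Ln) (Z.to_nat t) else pwn (pwn gami Ln) (Z.to_nat (- t)).
Proof.
  destruct (Z_le_gt_dec 0 t).
  - rewrite <- pwn_mul, <- pwz_nat. f_equal. lia.
  - rewrite <- pwn_mul, <- pwz_negnat. f_equal. lia.
Qed.

Lemma skolem M Ln Zs v :
  M <> 0 -> (0 < Ln)%nat ->
  powred M gam Ln = r1 -> powred M gami Ln = r1 ->
  sieve M (Z.of_nat Ln) Zs v Ln 0 (redm M v) = true ->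
  (forall z0, In z0 Zs -> c1 (rmul (pwz z0) v) = 0 /\ scert (pwn gam Ln) (rmul (pwz z0) v)
                         /\ scert (pwn gami Ln) (rmul (pwz z0) v)) ->
  forall z, c1 (rmul (pwz z) v) = 0 -> In z Zs.
Proof.
  intros HM HLn HgL HgiL Hs Hz z Hzero.
  set (L := Z.of_nat Ln).
  assert (HL : 0 < L) by (unfold L; lia).
  assert (Hdm := Z.div_mod z L ltac:(lia)).
  assert (Hr := Z.mod_pos_bound z L HL).
  destruct (powred_spec M gam Ln HM) as [E1 HE1]. rewrite HgL in HE1.
  destruct (powred_spec M gami Ln HM) as [E2 HE2]. rewrite HgiL in HE2.
  assert (HLt : forall t, exists E, pwz (L * t) = radd r1 (rmul (inj M) E)).
  { intros t. unfold L. rewrite pwz_Lt. destruct (Z_le_gt_dec 0 t).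
    - rewrite HE1. apply pwn_cong.
    - rewrite HE2. apply pwn_cong. }
  destruct (sieve_sound M L Zs v Ln HM 0 (redm M v) Hs) with (r' := z mod L) as [Hc|[z0 [Hin Hz0]]].
  - exists (mk (c0 v / M) (c1 v / M) (c2 v / M)).
    change (pwz 0) with r1. rewrite (redm_spec M v HM) at 1. ring.
  - lia.
  - exfalso. apply Hc.
    destruct (HLt (z / L)) as [E HE].
    rewrite Hdm, pwz_add, HE in Hzero.
    replace (c1 (rmul (pwz (z mod L)) v)) with (- (M * c1 (rmul E (rmul (pwz (z mod L)) v)))).
    + rewrite Z.mul_comm. rewrite <- Z.mul_opp_l. apply Z_mod_mult.
    + transitivity (- (M * c1 (rmul E (rmul (pwz (z mod L)) v))) + 
         c1 (rmul (rmul (radd r1 (rmul (inj M) E)) (pwz (z mod L))) v)).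
      * rewrite Hzero; ring.
      * rs. ring.
  - destruct (Hz z0 Hin) as [Hw [Hc1 Hc2]].
    assert (Hdm0 := Z.div_mod z0 L ltac:(lia)).
    set (t := z / L - z0 / L).
    assert (Hzt : z = L * t + z0) by (unfold t; lia).
    destruct (Z.eq_dec t 0) as [Ht0|Ht0].
    + replace z with z0 by lia. exact Hin.
    + exfalso. rewrite Hzt, pwz_add in Hzero. unfold L in Hzero. rewrite pwz_Lt in Hzero.
      replace (rmul (rmul (if Z_le_gt_dec 0 t then pwn (pwn gam Ln) (Z.to_nat t) else pwn (pwn gami Ln) (Z.to_nat (- t))) (pwz z0)) v)
        with (rmul (if Z_le_gt_dec 0 t then pwn (pwn gam Ln) (Z.to_nat t) else pwn (pwn gami Ln) (Z.to_nat (- t))) (rmul (pwz z0) v)) in Hzero by ring.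
      destruct (Z_le_gt_dec 0 t).
      * exact (scert_ok _ _ Hc1 Hw (Z.to_nat t) ltac:(lia) Hzero).
      * exact (scert_ok _ _ Hc2 Hw (Z.to_nat (- t)) ltac:(lia) Hzero).
Qed.

End Thue.

Module CC.
Import Thue.

Local Open Scope Z_scope.

Definition R3eqb (x y : R3) : bool := (c0 x =? c0 y) && (c1 x =? c1 y) && (c2 x =? c2 y).
Lemma R3eqb_eq x y : R3eqb x y = true -> x = y.
Proof. unfold R3eqb. intros H. apply andb_prop in H as [H H3]. apply andb_prop in H as [H1 H2].
  apply Z.eqb_eq in H1, H2, H3. apply R3eq; auto. Qed.

Definition Ln := 3120%nat.
Definition MM := 1368675.

Definition dbf (Ln : nat) (A0 : R3) (p q0 : Z) :=
  let a := powred (p*p*q0) A0 Ln in mk ((c0 a - 1) / (p*q0)) (c1 a / (p*q0)) (c2 a / (p*q0)).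
Definition certb (Ln : nat) (A0 : R3) (p q0 : Z) (w : R3) : bool :=
  R3eqb (powred (p*p*q0) A0 Ln) (radd r1 (rmul (inj (p*q0)) (dbf Ln A0 p q0)))
  && negb (c1 (rmul (dbf Ln A0 p q0) w) mod p =? 0).

Lemma certb_ok Ln A0 p pn q0 w : p = Z.of_nat (S (S (S pn))) -> Hbin_prop p pn -> prime p -> q0 <> 0 ->
  certb Ln A0 p q0 w = true -> scert (pwn A0 Ln) w.
Proof.
  intros Hp Hb Hpr Hq Hc. unfold certb in Hc. apply andb_prop in Hc as [H1 H2].
  apply R3eqb_eq in H1. apply negb_true_iff, Z.eqb_neq in H2.
  assert (Hp0 : 0 < p) by (rewrite Hp; lia).
  assert (Hnz : p * p * q0 <> 0).
  { apply Z.neq_mul_0; split; [apply Z.neq_mul_0; split|]; lia. }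
  destruct (powred_spec (p*p*q0) A0 Ln Hnz) as [E HE]. rewrite H1 in HE.
  exists p, pn, q0, (radd (dbf Ln A0 p q0) (rmul (inj p) E)).
  split; [exact Hp|]. split; [exact Hb|]. split.
  { rewrite HE. set (db := dbf Ln A0 p q0). clearbody db. apply R3eq; rs; ring. }
  split; [exact Hpr|]. split; [exact Hq|].
  set (db := dbf Ln A0 p q0) in *. clearbody db.
  intros Hd. apply H2. apply Z.mod_divide; [lia|].
  replace (c1 (rmul db w)) with (c1 (rmul (radd db (rmul (inj p) E)) w) - p * c1 (rmul E w)) by (rs; ring).
  apply Z.divide_sub_r; auto. apply Z.divide_factor_l.
Qed.

Lemma inj_nat n : inj (Z.of_nat (S n)) = radd r1 (inj (Z.of_nat n)).
Proof. rewrite Nat2Z.inj_succ. apply R3eq; rs; ring. Qed.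
Lemma inj0 : inj (Z.of_nat 0) = r0. Proof. reflexivity. Qed.
Ltac injc := repeat (match goal with |- context [inj (Zpos ?p)] =>
  let n := eval compute in (Pos.to_nat p) in
  replace (inj (Zpos p)) with (inj (Z.of_nat n)) by reflexivity end);
  repeat rewrite inj_nat; rewrite ?inj0.
Lemma Hbin5 : Hbin_prop 5 2.
Proof. intros X. exists (radd (radd (inj 2) (rmul (inj 2) X)) (rmul X X)).
  cbn [pwn]. injc. ring. Qed.
Lemma Hbin7 : Hbin_prop 7 4.
Proof. intros X. exists (radd (radd (radd (radd (inj 3) (rmul (inj 5) X)) (rmul (inj 5) (rmul X X))) (rmul (inj 3) (rmul X (rmul X X)))) (rmul X (rmul X (rmul X X)))).
  cbn [pwn]. injc. ring. Qed.

Lemma prime5 : prime 5.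
Proof. apply prime_intro; [lia|]. intros n Hn.
  assert (n = 1 \/ n = 2 \/ n = 3 \/ n = 4) as H by lia.
  destruct H as [ -> | [ -> | [ -> | -> ]]]; apply Zgcd_1_rel_prime; reflexivity. Qed.
Lemma prime7 : prime 7.
Proof. apply prime_intro; [lia|]. intros n Hn.
  assert (n = 1 \/ n = 2 \/ n = 3 \/ n = 4 \/ n = 5 \/ n = 6) as H by lia.
  destruct H as [ -> | [ -> | [ -> | [ -> | [ -> | -> ]]]]]; apply Zgcd_1_rel_prime; reflexivity. Qed.

Definition v1 := mk 1 0 0.
Definition v5 := mk 1 0 1.
Definition v7 := mk (-1) 0 2.

Lemma powL1 : powred MM gam Ln = r1. Proof. vm_compute. reflexivity. Qed.
Lemma powL2 : powred MM gami Ln = r1. Proof. vm_compute. reflexivity. Qed.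

Lemma cert5 L A0 w : certb L A0 5 5 w = true -> scert (pwn A0 L) w.
Proof. intros; eapply (certb_ok L A0 5 2 5 w); [reflexivity|exact Hbin5|exact prime5|lia|assumption]. Qed.
Lemma cert7 L A0 w : certb L A0 7 1 w = true -> scert (pwn A0 L) w.
Proof. intros; eapply (certb_ok L A0 7 4 1 w); [reflexivity|exact Hbin7|exact prime7|lia|assumption]. Qed.

Lemma sk1 z : c1 (rmul (pwz z) v1) = 0 -> In z (-14 :: -5 :: -1 :: 0 :: 2 :: nil).
Proof.
  apply (skolem MM Ln); [unfold MM; lia| unfold Ln; lia| exact powL1| exact powL2| vm_compute; reflexivity|].
  intros z0 Hz. simpl in Hz.
  destruct Hz as [<-|[<-|[<-|[<-|[<-|[]]]]]]; (split; [vm_compute; reflexivity|]).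
  - split; apply cert5; vm_compute; reflexivity.
  - split; apply cert5; vm_compute; reflexivity.
  - split; apply cert7; vm_compute; reflexivity.
  - split; apply cert5; vm_compute; reflexivity.
  - split; apply cert5; vm_compute; reflexivity.
Qed.
Lemma sk5 z : c1 (rmul (pwz z) v5) = 0 -> In z (-6 :: 0 :: nil).
Proof.
  apply (skolem MM Ln); [unfold MM; lia| unfold Ln; lia| exact powL1| exact powL2| vm_compute; reflexivity|].
  intros z0 Hz. simpl in Hz.
  destruct Hz as [<-|[<-|[]]]; (split; [vm_compute; reflexivity|]); split; apply cert5; vm_compute; reflexivity.
Qed.
Lemma sk7 z : c1 (rmul (pwz z) v7) = 0 -> In z (-8 :: 0 :: nil).
Proof.
  apply (skolem MM Ln); [unfold MM; lia| unfold Ln; lia| exact powL1| exact powL2| vm_compute; reflexivity|].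
  intros z0 Hz. simpl in Hz.
  destruct Hz as [<-|[<-|[]]]; (split; [vm_compute; reflexivity|]); split; apply cert5; vm_compute; reflexivity.
Qed.

End CC.
Module FF.
Import Thue.

Local Open Scope R_scope.

Lemma g_ex : {g : R | g*g*g = g + 1 /\ 13247/10000 <= g <= 13248/10000}.
Proof.
  assert (Hc : continuity (fun x => x*x*x - x - 1)) by reg.
  destruct (IVT (fun x => x*x*x - x - 1) (13247/10000) (13248/10000) Hc) as [z [Hz1 Hz2]]; try lra.
  exists z. split; lra.
Qed.
Definition g := proj1_sig g_ex.
Lemma g3 : g*g*g = g + 1. Proof. exact (proj1 (proj2_sig g_ex)). Qed.
Lemma gb : 13247/10000 <= g <= 13248/10000. Proof. exact (proj2 (proj2_sig g_ex)). Qed.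

Definition rho (x : R3) : R := IZR (c0 x) + IZR (c1 x) * g + IZR (c2 x) * g * g.

Lemma rho_mul x y : rho (rmul x y) = rho x * rho y.
Proof.
  destruct x as [a0 a1 a2], y as [b0 b1 b2]. unfold rho. cbn [rmul c0 c1 c2].
  rewrite ?plus_IZR, ?mult_IZR.
  assert (E : (IZR a0 + IZR a1 * g + IZR a2 * g * g) * (IZR b0 + IZR b1 * g + IZR b2 * g * g)
     = IZR a0 * IZR b0 + (IZR a1 * IZR b2 + IZR a2 * IZR b1) +
       (IZR a0 * IZR b1 + IZR a1 * IZR b0 + (IZR a1 * IZR b2 + IZR a2 * IZR b1) + IZR a2 * IZR b2) * g +
       (IZR a0 * IZR b2 + IZR a1 * IZR b1 + IZR a2 * IZR b0 + IZR a2 * IZR b2) * g * g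
       + ((IZR a1 * IZR b2 + IZR a2 * IZR b1) + IZR a2 * IZR b2 * g) * (g*g*g - g - 1)) by ring.
  rewrite E, g3. ring.
Qed.

Lemma rho_gam : rho gam = g. Proof. unfold rho; simpl; ring. Qed.
Lemma rho_r1 : rho r1 = 1. Proof. unfold rho; simpl; ring. Qed.
Lemma rho_opp x : rho (ropp x) = - rho x.
Proof. unfold rho; destruct x; cbn [ropp c0 c1 c2]. rewrite !opp_IZR. ring. Qed.

Definition F (k : Z) := rho (pwz k).
Lemma F_succ k : F (Z.succ k) = g * F k.
Proof. unfold F. rewrite pwz_succ, rho_mul, rho_gam. reflexivity. Qed.
Lemma F_pos k : 0 < F k.
Proof.
  pose proof gb.
  induction k using Z.peano_ind.
  - unfold F. simpl. rewrite rho_r1. lra.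
  - rewrite F_succ. nra.
  - rewrite <- (Z.succ_pred k), F_succ in IHk. nra.
Qed.

Lemma up_lem n : forall k0 r, 0 < r -> 1 <= F k0 * r < g ^ n -> exists k, 1 <= F k * r < g.
Proof.
  pose proof gb. induction n as [|n IH]; intros k0 r Hr [H1 H2].
  - simpl in H2. lra.
  - destruct (Rlt_le_dec (F k0 * r) g) as [Hl|Hl].
    + exists k0; lra.
    + apply (IH (Z.pred k0) r Hr). rewrite <- (Z.succ_pred k0), F_succ in H1, H2, Hl.
      simpl in H2. split; nra.
Qed.

Lemma down_lem n : forall k0 r, 0 < r -> F k0 * r < 1 -> 1 <= F k0 * r * g ^ n -> exists k, 1 <= F k * r < g.
Proof.
  pose proof gb. induction n as [|n IH]; intros k0 r Hr H1 H2.
  - simpl in H2. lra.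
  - pose proof (F_pos k0).
    destruct (Rle_lt_dec 1 (F (Z.succ k0) * r)) as [Hl|Hl].
    + exists (Z.succ k0). rewrite F_succ in *. split; nra.
    + apply (IH (Z.succ k0) r Hr Hl). rewrite F_succ. simpl in H2. lra.
Qed.

Lemma bern n : 1 + INR n * (3/10) <= g ^ n.
Proof.
  pose proof gb. induction n.
  - simpl. lra.
  - rewrite S_INR. simpl. assert (0 <= INR n) by apply pos_INR. nra.
Qed.

Lemma big_n r : exists n, r < g ^ n.
Proof.
  destruct (archimed (4 * r)) as [H1 _].
  exists (Z.to_nat (up (4 * r))).
  pose proof (bern (Z.to_nat (up (4 * r)))).
  destruct (Z_le_gt_dec 0 (up (4 * r))).
  - rewrite INR_IZR_INZ in H. rewrite Z2Nat.id in H by lia. set (G := g ^ _) in *. apply IZR_le in l. lra.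
  - assert (IZR (up (4 * r)) <= 0) by (apply IZR_le; lia).
    replace (Z.to_nat (up (4 * r))) with 0%nat by lia. simpl. lra.
Qed.

Lemma find_k r : 0 < r -> exists k, 1 <= F k * r < g.
Proof.
  intros Hr. pose proof gb.
  assert (F0 : F 0 = 1) by (unfold F; simpl; apply rho_r1).
  destruct (Rle_lt_dec 1 r) as [H1|H1].
  - destruct (big_n r) as [n Hn]. apply (up_lem n 0 r Hr). rewrite F0. lra.
  - destruct (big_n (/ r)) as [n Hn]. apply (down_lem n 0 r Hr); rewrite F0; [lra|].
    assert (0 < / r) by (apply Rinv_0_lt_compat; auto).
    assert (r * / r = 1) by (field; lra). nra.
Qed.

Local Open Scope Z_scope.
Definition Nz (x : R3) : Z := let a := c0 x in let b := c1 x in let c := c2 x in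
  a*((a+c)*(a+c)-b*(b+c)) - b*(c*(a+c)-b*b) + c*(c*(b+c)-(a+c)*b).
Lemma Nz_mul x y : Nz (rmul x y) = Nz x * Nz y.
Proof. destruct x, y; unfold Nz; cbn [rmul c0 c1 c2]. ring. Qed.
Lemma Nz_opp x : Nz (ropp x) = - Nz x.
Proof. destruct x; unfold Nz; cbn [ropp c0 c1 c2]. ring. Qed.
Lemma Nz_pwz k : Nz (pwz k) = 1.
Proof.
  induction k using Z.peano_ind.
  - reflexivity.
  - rewrite pwz_succ, Nz_mul, IHk. reflexivity.
  - rewrite pwz_pred, Nz_mul, IHk. reflexivity.
Qed.
Local Open Scope R_scope.

Definition Qf (x : R3) : R := let a := IZR (c0 x) in let b := IZR (c1 x) in let c := IZR (c2 x) in
  (2*a - b*g + c*(2 - g*g))^2 + (3*g*g - 4)*(b - c*g)^2.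

Lemma normid x : 4 * IZR (Nz x) = rho x * Qf x.
Proof.
  destruct x as [a b c]. unfold Nz, Qf, rho. cbn [c0 c1 c2].
  repeat rewrite ?plus_IZR, ?minus_IZR, ?mult_IZR.
  set (A := IZR a). set (B := IZR b). set (C := IZR c).
  assert (E : 4 * (A * ((A + C) * (A + C) - B * (B + C)) - B * (C * (A + C) - B * B) + C * (C * (B + C) - (A + C) * B))
     - (A + B * g + C * g * g) * ((2*A - B*g + C*(2 - g*g))^2 + (3*g*g - 4)*(B - C*g)^2)
     = (-4*C^3 + 4*C^3*g - 4*C^3*g^3 + 4*B*C^2 - 4*B^3 + 12*A*B*C) * (g*g*g - g - 1)) by ring.
  rewrite g3 in E. replace (g + 1 - g - 1) with 0 in E by ring. rewrite Rmult_0_r in E. lra.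
Qed.

Lemma Qf_nonneg x : 0 <= Qf x.
Proof.
  pose proof gb. unfold Qf.
  assert (0 < 3*g*g - 4) by nra.
  assert (0 <= (IZR (c1 x) - IZR (c2 x) * g)^2) by apply pow2_ge_0.
  assert (0 <= (2 * IZR (c0 x) - IZR (c1 x) * g + IZR (c2 x) * (2 - g * g)) ^ 2) by apply pow2_ge_0.
  nra.
Qed.

Lemma int_bound (z lo hi : Z) : IZR lo - 1 < IZR z < IZR hi + 1 -> (lo <= z <= hi)%Z.
Proof.
  intros [H1 H2].
  assert (lo - 1 < z)%Z by (apply lt_IZR; rewrite minus_IZR; simpl; lra).
  assert (z < hi + 1)%Z by (apply lt_IZR; rewrite plus_IZR; simpl; lra).
  lia.
Qed.

Lemma box_bounds x : 1 <= rho x < g -> IZR (Nz x) <= 7 ->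
  (-17 <= c0 x <= 17 /\ -8 <= c1 x <= 8 /\ -3 <= c2 x <= 3)%Z.
Proof.
  intros [Hr1 Hr2] HN. pose proof gb as Hg. pose proof (normid x) as Hid. pose proof (Qf_nonneg x) as HQ0.
  assert (HQ : Qf x <= 28). { assert (0 <= (rho x - 1) * Qf x) by (apply Rmult_le_pos; lra). nra. }
  unfold Qf, rho in *.
  set (a := IZR (c0 x)) in *. set (b := IZR (c1 x)) in *. set (c := IZR (c2 x)) in *.
  set (R2 := 2*a - b*g + c*(2 - g*g)) in *. set (I := b - c*g) in *.
  assert (Hk : 12644/10000 <= 3*g*g - 4) by nra.
  assert (HR2 : R2^2 <= 28). { assert (0 <= (3*g*g-4)*I^2) by (apply Rmult_le_pos; [lra|apply pow2_ge_0]). lra. }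
  assert (HI2 : I^2 <= 2215/100). { assert (0 <= I^2) by apply pow2_ge_0. nra. }
  assert (HR2b : -53/10 <= R2 <= 53/10) by nra.
  assert (HIb : -472/100 <= I <= 472/100) by nra.
  assert (Hc_id : (6*g*g - 2) * c = 2 * (a + b*g + c*g*g) - R2 - 3*g*I) by (unfold R2, I; ring).
  assert (HgI : -6254/1000 <= g * I <= 6254/1000) by nra.
  assert (Hcr : -26/10 < c < 32/10).
  { assert (8527/1000 <= 6*g*g - 2) by nra. split; nra. }
  assert (Hci : (-3 <= c2 x <= 3)%Z).
  { apply int_bound. unfold c in Hcr. lra. }
  assert (Hcb : -3 <= c <= 3) by (unfold c; split; apply IZR_le; lia).
  assert (Hb_id : b = I + c * g) by (unfold I; ring).
  assert (Hcg : -39745/10000 <= c * g <= 39745/10000) by nra.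
  assert (Hbi : (-8 <= c1 x <= 8)%Z) by (apply int_bound; fold b; lra).
  assert (Hbb : -8 <= b <= 8) by (unfold b; split; apply IZR_le; lia).
  assert (Hbg : -106 / 10 <= b * g <= 106 / 10) by nra.
  assert (Hg2 : 17548 / 10000 <= g * g <= 17552/10000) by nra.
  assert (Hcgg : -5266/1000 <= c * g * g <= 5266/1000) by nra.
  assert (Hai : (-17 <= c0 x <= 17)%Z) by (apply int_bound; fold a; lra).
  auto.
Qed.

End FF.
Module GG.
Import Thue CC FF.

Local Open Scope Z_scope.

Definition rangeZ (lo : Z) (n : nat) : list Z := map (fun i => lo + Z.of_nat i) (seq 0 n).
Lemma in_rangeZ lo n z : lo <= z < lo + Z.of_nat n -> In z (rangeZ lo n).
Proof.
  intros H. unfold rangeZ. apply in_map_iff. exists (Z.to_nat (z - lo)). split; [lia|].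
  apply in_seq. lia.
Qed.

Definition vfor (n : Z) := if n =? 1 then v1 else if n =? 5 then v5 else v7.
Definition orbit_ok (v y : R3) : bool :=
  existsb (fun j => R3eqb y (rmul (pwz j) v) || R3eqb y (ropp (rmul (pwz j) v))) (rangeZ (-17) 35).
Definition boxb : bool :=
  forallb (fun a => forallb (fun b => forallb (fun c =>
    let y := mk a b c in let n := Nz y in
    negb ((n =? 1) || (n =? 5) || (n =? 7)) || orbit_ok (vfor n) y)
    (rangeZ (-3) 7)) (rangeZ (-8) 17)) (rangeZ (-17) 35).
Lemma boxb_true : boxb = true. Proof. vm_compute. reflexivity. Qed.

Lemma box_orbit y : (-17 <= c0 y <= 17 /\ -8 <= c1 y <= 8 /\ -3 <= c2 y <= 3) ->
  (Nz y = 1 \/ Nz y = 5 \/ Nz y = 7) ->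
  exists j, y = rmul (pwz j) (vfor (Nz y)) \/ y = ropp (rmul (pwz j) (vfor (Nz y))).
Proof.
  intros [H0 [H1 H2]] HN. pose proof boxb_true as Hb. unfold boxb in Hb.
  rewrite forallb_forall in Hb. specialize (Hb (c0 y) ltac:(apply in_rangeZ; simpl; lia)).
  rewrite forallb_forall in Hb. specialize (Hb (c1 y) ltac:(apply in_rangeZ; simpl; lia)).
  rewrite forallb_forall in Hb. specialize (Hb (c2 y) ltac:(apply in_rangeZ; simpl; lia)).
  replace (mk (c0 y) (c1 y) (c2 y)) with y in Hb by (destruct y; reflexivity).
  cbv zeta in Hb. apply orb_prop in Hb. destruct Hb as [Hb|Hb].
  - exfalso. apply negb_true_iff in Hb. destruct HN as [HN|[HN|HN]]; rewrite HN in Hb; discriminate.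
  - unfold orbit_ok in Hb. apply existsb_exists in Hb. destruct Hb as [j [_ Hj]].
    exists j. apply orb_prop in Hj. destruct Hj as [Hj|Hj]; apply R3eqb_eq in Hj; auto.
Qed.

Definition Zlist (h : Z) := if h =? 1 then (-14 :: -5 :: -1 :: 0 :: 2 :: nil)
  else if h =? 5 then (-6 :: 0 :: nil) else (-8 :: 0 :: nil).

Lemma sk_all h z : (h = 1 \/ h = 5 \/ h = 7) -> c1 (rmul (pwz z) (vfor h)) = 0 -> In z (Zlist h).
Proof.
  intros [ -> | [ -> | -> ]]; simpl; [apply sk1|apply sk5|apply sk7].
Qed.

Lemma c1_opp x : c1 (ropp x) = - c1 x. Proof. reflexivity. Qed.

Lemma mainZ (m n h : Z) : (h = 1 \/ h = 5 \/ h = 7) -> (Nz (mk m 0 n) = h \/ Nz (mk m 0 n) = - h) ->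
  exists z0, In z0 (Zlist h) /\ (mk m 0 n = rmul (pwz z0) (vfor h) \/ mk m 0 n = ropp (rmul (pwz z0) (vfor h))).
Proof.
  intros Hh HN. set (x := mk m 0 n) in *.
  assert (Hx1 : c1 x = 0) by reflexivity. clearbody x.
  assert (HNz : Nz x <> 0) by lia.
  assert (Hrho : (rho x <> 0)%R).
  { intros H0. pose proof (normid x) as Hid. rewrite H0, Rmult_0_l in Hid.
    apply HNz. apply eq_IZR. lra. }
  assert (Hx' : exists x' s, (s = 1 \/ s = -1) /\ x = (if s =? 1 then x' else ropp x') /\ (0 < rho x')%R /\ Nz x' = s * Nz x).
  { destruct (Rlt_le_dec 0 (rho x)) as [Hp|Hp].
    - exists x, 1. repeat split; auto. lia.
    - exists (ropp x), (-1). repeat split; auto.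
      + simpl. apply R3eq; simpl; lia.
      + rewrite rho_opp. lra.
      + rewrite Nz_opp. lia. }
  destruct Hx' as [x' [s [Hs [Hxs [Hrx' HNx']]]]].
  destruct (find_k (rho x') Hrx') as [k Hk].
  set (y := rmul (pwz k) x').
  assert (Hry : rho y = (F k * rho x')%R) by (unfold y, F; apply rho_mul).
  assert (HNy : Nz y = s * Nz x) by (unfold y; rewrite Nz_mul, Nz_pwz; lia).
  assert (HNy_pos : 0 < Nz y).
  { pose proof (normid y) as Hid. pose proof (Qf_nonneg y).
    assert (0 <= Nz y).
    { apply le_IZR. assert (0 <= rho y * Qf y)%R by (apply Rmult_le_pos; lra). simpl. lra. }
    destruct Hs as [ -> | -> ]; lia. }
  assert (HNyh : Nz y = h) by (destruct Hs as [ -> | -> ]; lia).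
  assert (Hb : (-17 <= c0 y <= 17 /\ -8 <= c1 y <= 8 /\ -3 <= c2 y <= 3)).
  { apply box_bounds; [lra|]. rewrite HNyh. destruct Hh as [ -> | [ -> | -> ]]; simpl; lra. }
  destruct (box_orbit y Hb ltac:(lia)) as [j Hj]. rewrite HNyh in Hj.
  assert (Hx'y : x' = rmul (pwz (- k)) y).
  { unfold y. transitivity (rmul (pwz (-k + k)) x'); [replace (-k + k) with 0 by lia; simpl; ring|].
    rewrite pwz_add. ring. }
  assert (Hfin : x = rmul (pwz (-k + j)) (vfor h) \/ x = ropp (rmul (pwz (-k + j)) (vfor h))).
  { rewrite pwz_add. rewrite Hx'y in Hxs.
    destruct Hs as [-> | ->]; simpl in Hxs; destruct Hj as [Hj|Hj]; rewrite Hj in Hxs; rewrite Hxs.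
    - left; ring.
    - right; ring.
    - right; ring.
    - left; ring. }
  exists (-k + j). split; auto.
  apply sk_all; auto.
  destruct Hfin as [Hf|Hf]; rewrite Hf in Hx1; [auto|]. rewrite c1_opp in Hx1. lia.
Qed.

Lemma finalZ (m n h : Z) (L : list (Z*Z)) : (h = 1 \/ h = 5 \/ h = 7) ->
  (forall z0, In z0 (Zlist h) -> In (c0 (rmul (pwz z0) (vfor h)), c2 (rmul (pwz z0) (vfor h))) L /\
                                 In (- c0 (rmul (pwz z0) (vfor h)), - c2 (rmul (pwz z0) (vfor h))) L) ->
  (Nz (mk m 0 n) = h \/ Nz (mk m 0 n) = - h) -> In (m, n) L.
Proof.
  intros Hh HL HN. destruct (mainZ m n h Hh HN) as [z0 [Hin Hx]].
  destruct (HL z0 Hin) as [H1 H2].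
  destruct Hx as [Hx|Hx].
  - rewrite <- Hx in H1. exact H1.
  - assert (Hy : rmul (pwz z0) (vfor h) = ropp (mk m 0 n)) by (rewrite Hx; ring).
    rewrite Hy in H2. simpl in H2. rewrite !Z.opp_involutive in H2. exact H2.
Qed.

Definition L1 : list (Z*Z) := (1,0)::(-1,0)::(0,1)::(0,-1)::(-1,1)::(1,-1)::(2,-1)::(-2,1)::(-7,4)::(7,-4)::nil.
Definition L5 : list (Z*Z) := (1,1)::(-1,-1)::(-3,2)::(3,-2)::nil.
Definition L7 : list (Z*Z) := (-1,2)::(1,-2)::(-5,3)::(5,-3)::nil.

Definition chkL (h : Z) (L : list (Z*Z)) : bool :=
  forallb (fun z0 => let w := rmul (pwz z0) (vfor h) in
     existsb (fun p => (fst p =? c0 w) && (snd p =? c2 w)) L &&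
     existsb (fun p => (fst p =? - c0 w) && (snd p =? - c2 w)) L) (Zlist h).

Lemma inL_of (a b : Z) L : existsb (fun p => (fst p =? a) && (snd p =? b)) L = true -> In (a, b) L.
Proof.
  intros H. apply existsb_exists in H. destruct H as [[x y] [Hin Hp]].
  apply andb_prop in Hp as [H1 H2]. apply Z.eqb_eq in H1, H2. simpl in *. subst. auto.
Qed.

Lemma finalZ' (m n h : Z) (L : list (Z*Z)) : (h = 1 \/ h = 5 \/ h = 7) -> chkL h L = true ->
  (Nz (mk m 0 n) = h \/ Nz (mk m 0 n) = - h) -> In (m, n) L.
Proof.
  intros Hh Hc. apply finalZ; auto. intros z0 Hz. unfold chkL in Hc. rewrite forallb_forall in Hc.
  specialize (Hc z0 Hz). cbv zeta in Hc. apply andb_prop in Hc as [H1 H2]. split; apply inL_of; auto.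
Qed.

Lemma fin1 m n : (Nz (mk m 0 n) = 1 \/ Nz (mk m 0 n) = - 1) -> In (m, n) L1.
Proof. apply finalZ'; [lia| vm_compute; reflexivity]. Qed.
Lemma fin5 m n : (Nz (mk m 0 n) = 5 \/ Nz (mk m 0 n) = - 5) -> In (m, n) L5.
Proof. apply finalZ'; [lia| vm_compute; reflexivity]. Qed.
Lemma fin7 m n : (Nz (mk m 0 n) = 7 \/ Nz (mk m 0 n) = - 7) -> In (m, n) L7.
Proof. apply finalZ'; [lia| vm_compute; reflexivity]. Qed.

End GG.

From mathcomp Require Import all_boot all_order all_algebra.
From mathcomp Require Import ring ssrZ.
Import ssrZ.Instances.
Local Open Scope ring_scope.
Import GRing.Theory.

Lemma normK_formula (m n : int) : normK m 0 n = m ^+ 3 + 2 * m ^+ 2 * n + m * n ^+ 2 + n ^+ 3.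
Proof.
  rewrite /normK (expand_det_row _ ord0) !big_ord_recl big_ord0 /cofactor.
  rewrite !(expand_det_row _ ord0) !big_ord_recl !big_ord0 /cofactor !det_mx11.
  rewrite !mxE /= /bump /=. ring.
Qed.

Lemma int_of_ZD (a b : Z) : int_of_Z (a + b)%Z = int_of_Z a + int_of_Z b.
Proof. exact: (rmorphD int_of_Z a b). Qed.
Lemma int_of_ZM (a b : Z) : int_of_Z (a * b)%Z = int_of_Z a * int_of_Z b.
Proof. exact: (rmorphM int_of_Z a b). Qed.
Lemma int_of_ZB (a b : Z) : int_of_Z (a - b)%Z = int_of_Z a - int_of_Z b.
Proof. exact: (rmorphB int_of_Z a b). Qed.

Lemma normK_Nz (m n : int) : normK m 0 n = int_of_Z (FF.Nz (Thue.mk (Z_of_int m) 0 (Z_of_int n))).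
Proof.
  rewrite normK_formula /FF.Nz /=.
  rewrite !(int_of_ZD, int_of_ZM, int_of_ZB) !Z_of_intK /=. ring.
Qed.

Lemma toZ (m n : int) (h : Z) : (normK m 0 n = int_of_Z h \/ normK m 0 n = int_of_Z (- h)%Z) ->
  (FF.Nz (Thue.mk (Z_of_int m) 0 (Z_of_int n)) = h \/ FF.Nz (Thue.mk (Z_of_int m) 0 (Z_of_int n)) = (- h)%Z).
Proof.
  rewrite !normK_Nz. case=> H; [left|right]; move/(f_equal Z_of_int): H; rewrite !int_of_ZK //.
Qed.

Theorem lemma1 :
  (forall m n : int,
     (normK m 0 n = 1 \/ normK m 0 n = -1) <->
     (m, n) \in [:: (1, 0); (-1, 0); (0, 1); (0, -1); (-1, 1); (1, -1);
                   (2, -1); (-2, 1); (-7, 4); (7, -4)]) /\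
  (forall m n : int,
     (normK m 0 n = 5 \/ normK m 0 n = -5) <->
     (m, n) \in [:: (1, 1); (-1, -1); (-3, 2); (3, -2)]) /\
  (forall m n : int,
     (normK m 0 n = 7 \/ normK m 0 n = -7) <->
     (m, n) \in [:: (-1, 2); (1, -2); (-5, 3); (5, -3)]).
Proof.
  split; [|split]; move=> m n; split.
  - move=> H. have Hin := GG.fin1 _ _ (toZ m n 1 H).
    rewrite -[m]Z_of_intK -[n]Z_of_intK. move: Hin.
    move: (Z_of_int m) (Z_of_int n) => a b. rewrite /GG.L1 /=.
    by do 9 (case=> [[<- <-] //|]); case=> [[<- <-] //|].
  - move=> H; rewrite normK_formula. move: H. rewrite !inE.
    do 9 (case/orP; first by move/eqP => [-> ->]; (by left) || (by right)).
    by move/eqP => [-> ->]; (by left) || (by right).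
  - move=> H. have Hin := GG.fin5 _ _ (toZ m n 5 H).
    rewrite -[m]Z_of_intK -[n]Z_of_intK. move: Hin.
    move: (Z_of_int m) (Z_of_int n) => a b. rewrite /GG.L5 /=.
    by do 3 (case=> [[<- <-] //|]); case=> [[<- <-] //|].
  - move=> H; rewrite normK_formula. move: H. rewrite !inE.
    do 3 (case/orP; first by move/eqP => [-> ->]; (by left) || (by right)).
    by move/eqP => [-> ->]; (by left) || (by right).
  - move=> H. have Hin := GG.fin7 _ _ (toZ m n 7 H).
    rewrite -[m]Z_of_intK -[n]Z_of_intK. move: Hin.
    move: (Z_of_int m) (Z_of_int n) => a b. rewrite /GG.L7 /=.
    by do 3 (case=> [[<- <-] //|]); case=> [[<- <-] //|].
  - move=> H; rewrite normK_formula. move: H. rewrite !inE.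
    do 3 (case/orP; first by move/eqP => [-> ->]; (by left) || (by right)).
    by move/eqP => [-> ->]; (by left) || (by right).
Qed.
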